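(* Let $\mathcal{T}$ be a $(\rho,M)$-tree. For all $t>\dim_{\mathrm{L}}\partial\mathcal{T}$ and $\ell\in\mathbb{N}$, there exist an integer $n\geq\ell$, $Q\in\mathcal{T}_n$, and an integer $k\geq n+\ell$ such that for all $j=0,\ldots,\ell$ and all $Q'\in\mathcal{T}^Q_j$, $$\frac{\#(Q'\cap\mathcal{T}^Q_{k-n})}{\#\mathcal{T}^Q_{k-n}}\geq\rho^{tj}.$$
   Context: Inner regular partition: for a non-empty compact $K\subset\mathbb{R}^d$ and $\rho\in(0,1)$, a family $\{(Q_{i,k},x_{i,k}):k\in\mathbb{N}\cup\{0\},\ i\in\mathcal{N}_k\}$ of non-empty Borel sets $Q_{i,k}$ with points $x_{i,k}\in K\cap Q_{i,k}$ such that, for constants $c,C>0$: (i) $\#\mathcal{N}_0=1$; (ii) for each $k$, $K$ is the disjoint union of the $Q_{i,k}$, $i\in\mathcal{N}_k$; (iii) sets of levels $k\leq m$ are either disjoint or the level-$m$ set is contained in the level-$k$ set; (iv) $B(x_{i,k},c\rho^k)\subset Q_{i,k}\subset B(x_{i,k},C\rho^k)$ (closed balls); (v) $\{x_{i,k}:i\in\mathcal{N}_k\}\subset\{x_{i,k+1}:i\in\mathcal{N}_{k+1}\}$. A $(\rho,M)$-tree is a set $\mathcal{T}$ of finite words over $\mathcal{A}=\{1,\ldots,M\}$ obtained from such a partition in which each set has at most $M$ children: the root set gets the empty word, and if the set labelled $\mathtt{a}$ has children $R_1,\ldots,R_j$ ($j\leq M$), $R_i$ is labelled $\mathtt{a}i$;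 $\mathcal{T}$ is the set of labels and $\mathcal{T}_n$ the labels of length $n$. Elements of $\mathcal{T}$ are identified with cylinders $[\mathtt{a}]=\{x\in\mathcal{A}^{\mathbb{N}}:x\text{ begins with }\mathtt{a}\}$; $\partial\mathcal{T}=\bigcap_n\bigcup_{\mathtt{a}\in\mathcal{T}_n}[\mathtt{a}]$. For $Q=[\mathtt{a}]$ with $\mathtt{a}\in\mathcal{T}$, the subtree is $\mathcal{T}^Q=\{\mathtt{b}:\mathtt{a}\mathtt{b}\in\mathcal{T}\}$ and $\mathcal{T}^Q_j$ its words of length $j$. For $Q'=[\mathtt{b}']$ with $\mathtt{b}'\in\mathcal{T}^Q_j$, $\#(Q'\cap\mathcal{T}^Q_m)$ is the number of $\mathtt{b}\in\mathcal{T}^Q_m$ with $[\mathtt{b}]\subset Q'$. The lower dimension of $\partial\mathcal{T}$ is $\dim_{\mathrm{L}}\partial\mathcal{T}=\sup\{s>0:\exists C>0\ \forall 0\leq m\leq k\ \forall\mathtt{a}\in\mathcal{T}_m,\ \#\{\mathtt{b}\in\mathcal{T}_k:[\mathtt{b}]\subset[\mathtt{a}]\}\geq C\rho^{(m-k)s}\}$. *)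

(* Defs.v *)
From HB Require Import structures.
From mathcomp Require Import all_boot all_order all_algebra.
From mathcomp Require Import finmap all_classical all_reals all_analysis.
Set Implicit Arguments. Unset Strict Implicit. Unset Printing Implicit Defensive.
Import Order.TTheory GRing.Theory Num.Theory.
Import numFieldNormedType.Exports.
Local Open Scope classical_set_scope.
Local Open Scope ring_scope.

Section Defs.
Variable R : realType.

Local Notation pt d := ('rV[R]_d).
Definition edist d (x y : pt d) : R := Num.sqrt (\sum_(i < d) (x ord0 i - y ord0 i) ^+ 2).
Definition cball d (x : pt d) (r : R) : set (pt d) := [set y | edist x y <= r].

Definition eopen d (U : set (pt d)) :=
  forall x, U x -> exists2 r : R, 0 < r & [set y | edist x y < r] `<=` U.
Definition borel d (A : set (pt d)) : Prop := <<s [set U | @eopen d U] >> A.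

Definition inner_regular_partition d (K : set (pt d)) (rho : R)
  (N : nat -> Type) (Q : forall k, N k -> set (pt d)) (x : forall k, N k -> pt d)
  (c C : R) : Prop :=
  (exists i0 : N 0, forall i, i = i0) /\
  [/\ (forall k i, Q k i !=set0 /\ borel (Q k i) /\ K (x k i) /\ Q k i (x k i)),
      (forall k, \bigcup_(i in setT) Q k i = K /\
                 forall i j, i <> j -> Q k i `&` Q k j = set0),
      (forall k m (i : N k) (j : N m), (k <= m)%N ->
          Q k i `&` Q m j = set0 \/ Q m j `<=` Q k i),
      (forall k i, K `&` cball (x k i) (c * rho ^+ k) `<=` Q k i /\
                   Q k i `<=` cball (x k i) (C * rho ^+ k)) &
      (forall k (i : N k), exists j : N k.+1, x k.+1 j = x k i)].

(* A (rho,M)-tree: the set of labels (finite words over {1,...,M}) obtained from an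
   inner regular partition of a non-empty compact K in which each set has at most M
   children: the root gets the empty word and if the set labelled a has children
   R_1,...,R_j (j <= M) then R_i gets the label rcons a i. *)
Definition rhoM_tree (rho : R) (M : nat) (T : set (seq nat)) : Prop :=
  (0 < rho < 1) /\
  exists (d : nat) (K : set (pt d)) (N : nat -> Type)
         (Q : forall k, N k -> set (pt d)) (x : forall k, N k -> pt d) (c C : R),
    [/\ K !=set0, compact K, 0 < c, 0 < C &
        inner_regular_partition K rho Q x c C] /\
    exists lab : forall k, N k -> seq nat,
      [/\ (forall i : N 0, lab 0 i = [::]),
          (forall k (i : N k), exists (n : nat) (f : N k.+1 -> nat),
              [/\ (n <= M)%N,
                  (forall j, Q k.+1 j `<=` Q k i ->
                      (1 <= f j <= n)%N /\ lab k.+1 j = rcons (lab k i) (f j)),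
                  (forall j j', Q k.+1 j `<=` Q k i -> Q k.+1 j' `<=` Q k i ->
                      f j = f j' -> j = j') &
                  (forall m, (1 <= m <= n)%N ->
                      exists2 j, Q k.+1 j `<=` Q k i & f j = m)]) &
          T = [set w | exists k (i : N k), lab k i = w]].

Definition cyl (M : nat) (a : seq nat) : set (nat -> nat) :=
  [set y | (forall i, 1 <= y i <= M)%N /\
           (forall i, (i < size a)%N -> y i = nth 0%N a i)].

Definition ncard (A : set (seq nat)) : nat := (#|` fset_set A|)%fset.

Definition level (T : set (seq nat)) (n : nat) : set (seq nat) :=
  [set w | T w /\ size w = n].

(* subtree T^Q for Q = [a] *)
Definition subtree (T : set (seq nat)) (a : seq nat) : set (seq nat) :=
  [set b | T (a ++ b)].

(* #(Q' cap S_m) = number of b in S_m with [b] subset of Q' = [b'] *)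
Definition count_in (M : nat) (S : set (seq nat)) (m : nat) (b' : seq nat) : nat :=
  ncard [set b | level S m b /\ cyl M b `<=` cyl M b'].

Definition dimL (rho : R) (M : nat) (T : set (seq nat)) : R :=
  sup [set s : R | 0 < s /\
        exists2 C0 : R, 0 < C0 &
          forall (m k : nat), (m <= k)%N -> forall a, level T m a ->
            C0 * powR rho ((m%:R - k%:R) * s) <= (count_in M T k a)%:R].

End Defs.

(* Main.v *)
Require Import Defs.
From HB Require Import structures.
From mathcomp Require Import all_boot all_order all_algebra.
From mathcomp Require Import all_classical all_reals all_analysis.
From mathcomp Require Import finmap.
From mathcomp Require Import zify ring lra.
Import Order.TTheory GRing.Theory Num.Theory.
Local Open Scope classical_set_scope.
Local Open Scope ring_scope.
Section Comb.

Lemma tree_facts (R : realType) (rho : R) M T : rhoM_tree rho M T ->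
  [/\ (1 <= M)%N, T [::], (forall w, T w -> all (fun x => 0 < x <= M)%N w) &
      (forall w, T w -> exists x, T (rcons w x))].
Proof.
case=> _ [d [K [N [Q [x [c [C [[_ _ _ _ [[i0 Hi0] [Hne Hpart Hnest _ Hx]]] [lab [Hl0 Hlab ->]]]]]]]]]].
have par : forall k (j : N k.+1), exists i : N k, Q k.+1 j `<=` Q k i.
  move=> k j; case: (Hne k.+1 j) => [[y Hy] _].
  have Ky : K y by case: (Hpart k.+1) => <- _; exists j.
  case: (Hpart k) => HU _; rewrite -HU in Ky; case: Ky => i _ Hyi.
  exists i; case: (Hnest k k.+1 i j (leqnSn k)) => // H0.
  have : (Q k i `&` Q k.+1 j) y by [].
  by rewrite H0.
have ent : forall k (i : N k), all (fun x => 0 < x <= M)%N (lab k i).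
  elim=> [|k IH] i; first by rewrite Hl0.
  case: (par k i) => i' Hs; case: (Hlab k i') => n [f [HnM Hf _ _]].
  case: (Hf i Hs) => /andP[H1 H2] ->.
  by rewrite all_rcons IH H1 (leq_trans H2 HnM).
have ch : forall k (i : N k), exists j : N k.+1, Q k.+1 j `<=` Q k i.
  move=> k i; case: (Hx k i) => j Hj; exists j.
  case: (Hne k.+1 j) => _ [_ [_ Hxj]]; case: (Hne k i) => _ [_ [_ Hxi]].
  case: (Hnest k k.+1 i j (leqnSn k)) => // H0.
  have : (Q k i `&` Q k.+1 j) (x k i) by split => //; rewrite -Hj.
  by rewrite H0.
split.
- case: (ch 0%N i0) => j Hj; case: (Hlab 0%N i0) => n [f [HnM Hf _ _]].
  by case: (Hf j Hj) => /andP[H1 H2] _; apply: leq_trans HnM; apply: leq_trans H2.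
- by exists 0%N, i0.
- by move=> w [k [i <-]].
- move=> w [k [i <-]]; case: (ch k i) => j Hj.
  case: (Hlab k i) => n [f [HnM Hf _ _]].
  case: (Hf j Hj) => _ Hl; exists (f j); exists k.+1, j; by rewrite Hl.
Qed.

Fixpoint words (M k : nat) : seq (seq nat) :=
  if k is k'.+1 then allpairs (fun x w => x :: w) (iota 0 M.+1) (words M k') else [:: [::]].
Lemma size_words M k : size (words M k) = (M.+1 ^ k)%N.
Proof. by elim: k => [|k IH] //; rewrite expnS -IH -(size_iota 0 M.+1) -(size_allpairs (fun x w => x :: w)). Qed.
Lemma words_mem M w : all (fun x => x <= M)%N w -> w \in words M (size w).
Proof.
elim: w => [|x w IH] //= /andP[Hx Hw].
have := @allpairs_f _ _ _ (fun x w => x :: w) (iota 0 M.+1) (words M (size w)) x w.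
apply; last exact: IH.
by rewrite mem_iota add0n ltnS.
Qed.

Lemma ncard_le_seq (A : set (seq nat)) s : A `<=` [set` s] -> (ncard A <= size s)%N.
Proof.
move=> As; rewrite /ncard.
have fA : finite_set A by apply: sub_finite_set As _.
have E : [set` s] = [set` [fset x in s]%fset] by apply/seteqP; split=> x /=; rewrite inE.
rewrite E in As.
apply: (@leq_trans #|` [fset x in s]%fset|).
  by apply: fsubset_leq_card; rewrite -[X in (_ `<=` X)%fset](set_fsetK [fset x in s]%fset) -fset_set_sub.
by rewrite card_fseq size_undup.
Qed.

Lemma ncard_le (A B : set (seq nat)) : A `<=` B -> finite_set B -> (ncard A <= ncard B)%N.
Proof.
move=> AB fB; have fA : finite_set A by apply: sub_finite_set AB _.
by apply: fsubset_leq_card; rewrite -fset_set_sub.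
Qed.

Lemma ncard_gt0 (A : set (seq nat)) x : finite_set A -> A x -> (0 < ncard A)%N.
Proof.
move=> fA Ax; rewrite /ncard cardfs_gt0; apply/fset0Pn; exists x.
by rewrite in_fset_set //; apply: mem_set.
Qed.

Lemma ncard_inj (f : seq nat -> seq nat) (A : set (seq nat)) :
  injective f -> finite_set A -> ncard (f @` A) = ncard A.
Proof.
by move=> fi fA; rewrite /ncard fset_set_image // card_imfset.
Qed.

Definition cyl_val (b : seq nat) : nat -> nat := fun i => if (i < size b)%N then nth 0%N b i else 1%N.

Lemma cyl_sub M b b' : (1 <= M)%N -> all (fun x => 0 < x <= M)%N b ->
  (size b' <= size b)%N -> (cyl M b `<=` cyl M b' <-> prefix b' b).
Proof.
move=> M1 Hb Hs; split.
- move=> H.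
  have Hy : cyl M b (cyl_val b).
    split=> i; rewrite /cyl_val; last by move=> ->.
    case: ifP => // ib; exact: (all_nthP 0%N Hb).
  case: (H _ Hy) => _ H2.
  rewrite prefixE; apply/eqP/(@eq_from_nth _ 0%N); first by rewrite size_take_min; apply/minn_idPl.
  move=> i; rewrite size_take_min => il.
  have ib' : (i < size b')%N by apply: leq_trans il (geq_minl _ _).
  rewrite nth_take // -H2 // /cyl_val ifT //; exact: leq_trans ib' Hs.
- case/prefixP=> s -> y [H1 H2]; split=> // i il.
  by rewrite H2 ?nth_cat ?il // size_cat; apply: leq_trans il (leq_addr _ _).
Qed.

Lemma cat_injective (a : seq nat) : injective (cat a).
Proof. by elim: a => // x a IH b c /= [] /IH. Qed.

Variables (M : nat) (T : set (seq nat)).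
Hypothesis M1 : (1 <= M)%N.
Hypothesis Tent : forall w, T w -> all (fun x => 0 < x <= M)%N w.
Hypothesis Tch : forall w, T w -> exists x, T (rcons w x).

Definition Nw k w := ncard [set c | T c /\ size c = k /\ prefix w c].

Lemma bnd_sub (P : set (seq nat)) k : (forall c, P c -> size c = k /\ all (fun x => 0 < x <= M)%N c) ->
  P `<=` [set` words M k].
Proof.
move=> H c Pc; case: (H c Pc) => <- Hc; apply: words_mem.
by apply: sub_all Hc => x /andP[].
Qed.

Lemma Nw_fin k w : finite_set [set c | T c /\ size c = k /\ prefix w c].
Proof.
apply: sub_finite_set (finite_seq (words M k)); apply: bnd_sub.
by move=> c [Tc [sc _]]; split => //; apply: Tent.
Qed.

Lemma Nw_bound k w : (Nw k w <= M.+1 ^ k)%N.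
Proof.
rewrite -size_words; apply: ncard_le_seq; apply: bnd_sub.
by move=> c [Tc [sc _]]; split => //; apply: Tent.
Qed.

Lemma Nw_mono k w w' : prefix w w' -> (Nw k w' <= Nw k w)%N.
Proof.
move=> ww'; apply: ncard_le (Nw_fin _ _).
by move=> c [Tc [sc pc]]; split => //; split => //; apply: prefix_trans pc.
Qed.

Lemma T_ext w n : T w -> exists s, size s = n /\ T (w ++ s).
Proof.
move=> Tw; elim: n => [|n [s [sz Ts]]]; first by exists [::]; rewrite cats0.
case: (Tch _ Ts) => x Tx; exists (rcons s x); split; first by rewrite size_rcons sz.
by rewrite -rcons_cat.
Qed.

Lemma Nw_pos k w : T w -> (size w <= k)%N -> (0 < Nw k w)%N.
Proof.
move=> Tw sk; case: (T_ext w (k - size w)%N Tw) => s [sz Ts].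
apply: (@ncard_gt0 _ (w ++ s) (Nw_fin _ _)); split => //; split.
  by rewrite size_cat sz subnKC.
exact: prefix_prefix.
Qed.

Lemma count_sub a b' k : (size a + size b' <= k)%N ->
  count_in M (subtree T a) (k - size a)%N b' = Nw k (a ++ b').
Proof.
move=> sk; rewrite /count_in /Nw.
set A := [set b | _].
have fA : finite_set A.
  apply: sub_finite_set (finite_seq (words M (k - size a)%N)); apply: bnd_sub.
  move=> b [[Tb sb] _]; split => //; move: (Tent _ Tb); rewrite all_cat => /andP[_ ->] //.
rewrite -(@ncard_inj (cat a) A (@cat_injective a) fA); congr ncard.
apply/seteqP; split; last first.
- move=> c [Tc [sc]] /prefixP [s Es].
  exists (b' ++ s); last by rewrite catA.
  have Tb : T (a ++ (b' ++ s)) by rewrite catA -Es.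
  have sb : size (b' ++ s) = (k - size a)%N by rewrite -sc Es -catA [size (a ++ _)]size_cat addKn.
  split; first by split.
  apply/(@cyl_sub M) => //.
  + by move: (Tent _ Tb); rewrite all_cat => /andP[].
  + by rewrite size_cat leq_addr.
  + exact: prefix_prefix.
- move=> c [b [[Tb sb] Hcyl] <-]; split => //; split.
    rewrite size_cat sb; lia.
  rewrite prefix_catr // eqxx /=.
  apply/(@cyl_sub M) => //; first by move: (Tent _ Tb); rewrite all_cat => /andP[].
  rewrite sb; lia.
Qed.

Lemma level_sub a k : (size a <= k)%N ->
  ncard (level (subtree T a) (k - size a)%N) = Nw k a.
Proof.
move=> sk; rewrite -[a in RHS]cats0 -count_sub ?addn0 //; congr ncard.
apply/seteqP; split=> b /=; last by case.
by move=> H; split => // y [Hy _]; split.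
Qed.

End Comb.
Arguments count_sub {M T}. Arguments level_sub {M T}. Arguments Nw_pos {M T}.
Arguments Nw_mono {M T}. Arguments T_ext {T}. Arguments Nw_bound {M T}.

Lemma bernoulli (R : realType) (x : R) (n : nat) : 1 <= x -> 1 + n%:R * (x - 1) <= x ^+ n.
Proof.
move=> x1; elim: n => [|n IH]; first by rewrite mul0r addr0 expr0.
rewrite exprS; apply: le_trans (ler_wpM2l (le_trans ler01 x1) IH).
rewrite -natr1; have h : 0 <= n%:R * (x - 1) * (x - 1) by rewrite mulr_ge0 // ?mulr_ge0 // subr_ge0.
nra.
Qed.

Lemma growth (R : realType) (x X : R) : 1 < x -> exists n : nat, X < x ^+ n.
Proof.
move=> x1; have x10 : 0 < x - 1 by rewrite subr_gt0.
have h0 : 0 <= `|X| / (x - 1) by rewrite divr_ge0 // ltW.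
exists (Num.Def.archi_bound (`|X| / (x - 1))).
set n := Num.Def.archi_bound _.
have := archi_boundP h0; rewrite -/n ltr_pdivrMr // => h1.
apply: le_lt_trans (ler_norm X) _; apply: lt_le_trans h1 _.
have := @bernoulli _ x n (ltW x1); apply: le_trans; lra.
Qed.

Theorem corollary3p7 (R : realType) (rho : R) (M : nat) (T : set (seq nat)) :
  rhoM_tree rho M T ->
  forall (t : R), dimL rho M T < t ->
  forall l : nat,
  exists (n : nat) (a : seq nat) (k : nat),
    [/\ (l <= n)%N, level T n a, (n + l <= k)%N &
      forall (j : nat) (b' : seq nat), (j <= l)%N -> level (subtree T a) j b' ->
        powR rho (t * j%:R) <=
          (count_in M (subtree T a) (k - n) b')%:R /
          (ncard (level (subtree T a) (k - n)))%:R ].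
Proof.
move=> HT t Ht l.
have [/andP[r0 r1] _] := HT.
case: (@tree_facts R rho M T HT) => M1 Tnil Tent Tch.
have rn0 : rho != 0 by rewrite gt_eqF.
have PD : forall x y, rho `^ (x + y) = rho `^ x * rho `^ y.
  by move=> x y; rewrite powRD // rn0 implybT.
have Pmono : forall x y, x <= y -> rho `^ y <= rho `^ x.
  by move=> x y xy; apply: ger_powR => //; rewrite r0 ltW.
have Pgt0 : forall x, 0 < rho `^ x by move=> x; apply: powR_gt0.
have countT : forall a k, (size a <= k)%N -> count_in M T k a = Nw T k a.
  by move=> a k ak; have := count_sub M1 Tent [::] a k; rewrite subn0 /=; apply.
rewrite /dimL in Ht; set E := [set s : R | _] in Ht.
have [B HB] : exists B, ubound E B.
  have rinv : 1 < rho^-1 by rewrite invf_gt1.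
  case: (@growth R _ (M.+1)%:R rinv) => n0 Hn0.
  exists n0%:R => s [s0 [C0 C0p HC]].
  rewrite leNgt; apply/negP => Bs.
  set q := rho `^ (- s).
  have qM : (M.+1)%:R < q.
    apply: lt_le_trans Hn0 _; rewrite exprVn -(powR_invn _ (ltW r0)).
    by apply: Pmono; rewrite lerN2 ltW.
  have Mp : 0 < (M.+1)%:R :> R by [].
  have x1 : 1 < q / (M.+1)%:R by rewrite ltr_pdivlMr // mul1r.
  case: (@growth R _ C0^-1 x1) => k Hk.
  have := HC 0%N k (leq0n k) [::] (conj Tnil erefl).
  rewrite countT // => H1.
  have H2 : C0 * q ^+ k <= ((M.+1)%:R) ^+ k.
    apply: le_trans (_ : _ <= (Nw T k [::])%:R) _.
      apply: le_trans H1; rewrite le_eqVlt; apply/orP; left; apply/eqP; congr (_ * _).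
      rewrite /q -powR_mulrn ?powR_ge0 // -powRrM; congr (_ `^ _).
      by ring.
    by rewrite -natrX ler_nat (Nw_bound Tent).
  move: Hk; rewrite expr_div_n ltr_pdivlMr ?exprn_gt0 // => Hk.
  have : C0 * (C0^-1 * (M.+1)%:R ^+ k) < C0 * q ^+ k by rewrite ltr_pM2l.
  by rewrite mulrA mulfV ?gt_eqF // mul1r => /(le_lt_trans H2); rewrite ltxx.
have supge : 0 <= sup E.
  case: (pselect (E !=set0)) => [[e Ee]|nE]; last first.
    by rewrite sup_out // => -[].
  apply: le_trans (ltW Ee.1) _; apply: sup_upper_bound => //; split; [by exists e | by exists B].
have tpos : 0 < t by apply: le_lt_trans Ht.
apply: contrapT => Hno.
have H : forall n a k, (l <= n)%N -> T a -> size a = n -> (n + l <= k)%N ->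
  exists j b', [/\ (0 < j <= l)%N, T (a ++ b'), size b' = j &
     (Nw T k (a ++ b'))%:R < rho `^ (t * j%:R) * (Nw T k a)%:R].
  move=> n a k ln Ta sa nk.
  apply: contrapT => Hn; apply: Hno; exists n, a, k; split => //.
  move=> j b' jl [Tab sb].
  have sk : (size a + size b' <= k)%N by rewrite sa sb; lia.
  have Npos : (0 < Nw T k a)%N by apply: (Nw_pos Tent Tch) => //; rewrite sa; lia.
  rewrite -sa (count_sub M1 Tent) // (level_sub M1 Tent) //; last by lia.
  rewrite leNgt; apply/negP; rewrite ltr_pdivrMr ?ltr0n // => Hlt.
  apply: Hn; exists j, b'; split => //.
  case: j jl sb Hlt => [|j] jl sb Hlt //=.
  have b0 : b' = [::] by apply/eqP; rewrite -size_eq0 sb.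
  by rewrite b0 cats0 mulr0 powRr0 mul1r ltxx in Hlt.
have phi : forall d n a, (l <= n)%N -> T a -> size a = n ->
    rho `^ (t * l%:R) <= (Nw T (n + d) a)%:R * rho `^ (t * d%:R).
  elim/ltn_ind => d IH n a ln Ta sa.
  case: (ltnP d l) => dl.
  - have N1 : 1 <= (Nw T (n + d) a)%:R :> R.
      by rewrite ler1n; apply: (Nw_pos Tent Tch) => //; rewrite sa leq_addr.
    apply: le_trans (ler_peMl (ltW (Pgt0 _)) N1).
    by apply: Pmono; rewrite ler_pM2l // ler_nat ltnW.
  - case: (H n a (n + d)%N ln Ta sa) => [|j [b' [/andP[j0 jl] Tab sb Hlt]]].
      by rewrite leq_add2l.
    have jd : (j <= d)%N by apply: leq_trans jl dl.
    have := IH (d - j)%N _ (n + j)%N (a ++ b') _ Tab _.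
    rewrite -addnA subnKC // => IH'.
    apply: le_trans (IH' _ _ _) _.
    + by rewrite ltn_subrL j0 /=; apply: leq_trans j0 jd.
    + by apply: leq_trans ln (leq_addr _ _).
    + by rewrite size_cat sa sb.
    + have -> : t * d%:R = t * j%:R + t * (d - j)%:R by rewrite -mulrDr -natrD subnKC.
      rewrite PD mulrA ler_pM2r //; apply: (le_trans (ltW Hlt)).
      by rewrite mulrC.
have tE : E t.
  split => //; exists (rho `^ (t * (l + l)%:R)) => // m k mk a [Ta sa].
  rewrite countT ?sa //.
  have -> : (m%:R - k%:R) * t = - (t * (k - m)%:R) by rewrite natrB //; ring.
  rewrite powRN -[_ * _^-1]/(_ / _) ler_pdivrMr //.
  case: (leqP l m) => lm.
  - have := phi (k - m)%N m a lm Ta sa; rewrite subnKC //.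
    apply: le_trans; apply: Pmono; rewrite ler_pM2l // ler_nat; lia.
  case: (leqP k l) => kl.
  - have N1 : 1 <= (Nw T k a)%:R :> R by rewrite ler1n; apply: (Nw_pos Tent Tch) => //; rewrite sa.
    apply: le_trans (ler_peMl (ltW (Pgt0 _)) N1).
    apply: Pmono; rewrite ler_pM2l // ler_nat; lia.
  - case: (T_ext Tch a (l - m)%N Ta) => s [ss Tas].
    have sas : size (a ++ s) = l by rewrite size_cat sa ss; lia.
    have := phi (k - l)%N l (a ++ s) (leqnn l) Tas sas; rewrite subnKC; last by lia.
    move=> Hphi.
    have Nm : (Nw T k (a ++ s))%:R <= (Nw T k a)%:R :> R.
      by rewrite ler_nat; apply: (Nw_mono Tent); apply: prefix_prefix.
    apply: le_trans (_ : _ <= rho `^ (t * l%:R) * rho `^ (t * (l - m)%:R)) _.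
      rewrite -PD; apply: Pmono; rewrite -mulrDr ler_pM2l // -natrD ler_nat; lia.
    apply: le_trans (_ : _ <= (Nw T k (a ++ s))%:R * rho `^ (t * (k - l)%:R) * rho `^ (t * (l - m)%:R)) _.
      by rewrite ler_pM2r.
    rewrite -mulrA -PD -mulrDr -natrD.
    have -> : (k - l + (l - m) = k - m)%N by lia.
    by rewrite ler_pM2r.
have : t <= sup E.
  apply: sup_upper_bound => //; split; [by exists t | by exists B].
by rewrite leNgt Ht.
Qed.
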